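(* Let $\mathcal H=(\mathcal V,\mathcal E)$ be a hypergraph and $\vec x$ an optimal solution to the LP $\max\{\sum_ew_ex_e:\sum_{e\ni v}x_e\le1\ \forall v\in\mathcal V,\ \vec x\in[0,1]^{\mathcal E}\}$. Run the algorithm $\mathrm{HM}(\alpha)$ described in the context with $\alpha=1$. Then each edge $e$ is added to the output matching with probability at least $\frac{x_e}{k_e+1+o(k_e)}$, where $k_e=|e|$.
   Context: Algorithm $\mathrm{HM}(\alpha)$: for each edge $e$ generate an independent Bernoulli random variable $Y_e$ with mean $\alpha x_e$; assign to each edge an independent uniformly random number in $[0,1]$ and consider the edges in increasing order of these numbers; when considering $e$, add $e$ to the matching $\mathcal R$ iff $Y_e=1$ and $e$ is safe (no vertex of $e$ is already covered by an edge in $\mathcal R$); return $\mathcal R$. *)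

(* Defs.v *)
From mathcomp Require Import all_boot all_order all_algebra all_fingroup.
Set Implicit Arguments. Unset Strict Implicit. Unset Printing Implicit Defensive.
Import Order.TTheory GRing.Theory Num.Theory.
Local Open Scope ring_scope.

(* A hypergraph with vertex type V and edge type E (parallel edges allowed):
   inc e is the set of vertices of edge e. *)

Section HM.
Variables (R : realFieldType) (V E : finType) (inc : E -> {set V}).

Definition lp_feasible (x : E -> R) : Prop :=
  (forall e, 0 <= x e <= 1) /\
  (forall v : V, \sum_(e | v \in inc e) x e <= 1).

Definition lp_optimal (w x : E -> R) : Prop :=
  lp_feasible x /\
  forall y, lp_feasible y -> \sum_e w e * y e <= \sum_e w e * x e.

Definition safe (Rm : {set E}) (e : E) : bool :=
  [forall f in Rm, [disjoint inc f & inc e]].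

Definition HM_run (s : seq E) (Y : {ffun E -> bool}) : {set E} :=
  foldl (fun Rm e => if Y e && safe Rm e then e |: Rm else Rm) set0 s.

Definition perm_order (sigma : {perm E}) : seq E := [seq sigma i | i <- enum E].

Definition coin_prob (alpha : R) (x : E -> R) (Y : {ffun E -> bool}) : R :=
  \prod_f (if Y f then alpha * x f else 1 - alpha * x f).

(* Probability that HM(alpha) puts e in the output matching. The order given
   by i.i.d. uniform [0,1] labels is (a.s.) a uniformly random permutation. *)
Definition HM_prob (alpha : R) (x : E -> R) (e : E) : R :=
  \sum_(sigma : {perm E}) \sum_(Y : {ffun E -> bool})
     (#|{perm E}|%:R)^-1 * coin_prob alpha x Y *
     (e \in HM_run (perm_order sigma) Y)%:R.

End HM.

Definition little_o_id (R : realFieldType) (g : nat -> R) : Prop :=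
  forall eps : R, 0 < eps -> exists N : nat, forall k : nat, (N <= k)%N ->
    `|g k| <= eps * k%:R.

(* Main.v *)
Require Import Defs.
From mathcomp Require Import all_boot all_order all_algebra all_fingroup.
From mathcomp Require Import ring lra.
Import Order.TTheory GRing.Theory Num.Theory.
Local Open Scope ring_scope.

Section Run.
Variables (V E : finType) (inc : E -> {set V}) (Y : {ffun E -> bool}).
Let F := (fun Rm e => if Y e && safe inc Rm e then e |: Rm else Rm).

Lemma foldl_mono (s : seq E) (Rm : {set E}) : Rm \subset foldl F Rm s.
Proof.
elim: s Rm => [|a s IH] Rm /=; first exact: subxx.
apply: subset_trans (IH _); rewrite /F; case: ifP => _; [exact: subsetU1|exact: subxx].
Qed.

Lemma foldl_sub (s : seq E) (Rm : {set E}) f : f \in foldl F Rm s -> (f \in Rm) || ((f \in s) && Y f).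
Proof.
elim: s Rm => [|a s IH] Rm /=; first by move=> ->.
move=> /IH; rewrite /F in_cons; case: ifP => [/andP[Ya _]|_].
  rewrite in_setU1; case/orP => [/orP[/eqP->|->]|/andP[-> ->]]; rewrite ?eqxx ?Ya ?orbT //.
by case/orP=> [->//|/andP[-> ->]]; rewrite !orbT.
Qed.

Lemma run_in (s : seq E) e : Y e -> e \in s ->
  (forall f, f \in take (index e s) s -> Y f -> [disjoint inc f & inc e]) ->
  e \in foldl F set0 s.
Proof.
move=> Ye es H.
rewrite -(cat_take_drop (index e s) s) foldl_cat.
rewrite (drop_nth e) ?index_mem // nth_index //=.
set Rm := foldl F set0 _.
have sf : safe inc Rm e.
  apply/forall_inP => f /foldl_sub; rewrite in_set0 /= => /andP[fs Yf].
  exact: H.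
apply: (subsetP (foldl_mono _ _)); rewrite /F Ye sf /=; exact: setU11.
Qed.
End Run.

Section Cnt.
Set Implicit Arguments. Unset Strict Implicit.
Local Open Scope nat_scope.
Variable E : finType.
Definition pos (s : {perm E}) (f : E) := index f (perm_order s).
Definition first (s : {perm E}) (T : {set E}) (f : E) : bool :=
  [forall g in T, (g != f) ==> (pos s f < pos s g)].

Lemma mem_po (s : {perm E}) f : f \in perm_order s.
Proof. by rewrite /perm_order -{1}(permKV s f); apply: map_f; rewrite mem_enum. Qed.

Lemma pos_inj s f g : pos s f = pos (s : {perm E}) g -> f = g.
Proof.
move=> h; rewrite -(nth_index f (mem_po s f)) -(nth_index f (mem_po s g)).
by rewrite -/(pos s f) h.
Qed.

Lemma po_mul (s : {perm E}) t : perm_order (s * t)%g = map t (perm_order s).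
Proof. by rewrite /perm_order -map_comp; apply: eq_map => i; rewrite /= permM. Qed.

Lemma pos_mul s t g : pos (s * t)%g (t g) = pos (s : {perm E}) g.
Proof. by rewrite /pos po_mul index_map //; apply: perm_inj. Qed.

Lemma first_exists s (T : {set E}) e : e \in T -> exists2 f, f \in T & first (s : {perm E}) T f.
Proof.
move=> eT; case: (@arg_minnP _ e (fun x => x \in T) (pos s) eT) => f fT fmin.
exists f => //; apply/forall_inP => g gT; apply/implyP => gf.
rewrite ltn_neqAle fmin // andbT; apply/eqP => h.
by rewrite (pos_inj h) eqxx in gf.
Qed.

Lemma pos_mulV (s t : {perm E}) g : pos (s * t)%g g = pos s ((t^-1)%g g).
Proof. by rewrite -(pos_mul s t) permKV. Qed.

Lemma first_tperm (s : {perm E}) (T : {set E}) e f : e \in T -> f \in T ->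
  first (s * tperm e f)%g T f = first s T e.
Proof.
move=> eT fT; rewrite /first.
have tT g : (tperm e f g \in T) = (g \in T).
  by case: tpermP => [->|->|/eqP ge /eqP gf]; rewrite ?fT ?eT.
apply/forall_inP/forall_inP => H g gT.
  have := H (tperm e f g); rewrite tT => /(_ gT).
  rewrite !pos_mulV tpermV tpermK tpermR.
  by rewrite -[X in tperm e f g != X](tpermL e f) (inj_eq (@perm_inj _ (tperm e f))).
rewrite !pos_mulV tpermV tpermR.
have := H (tperm e f g); rewrite tT => /(_ gT).
by rewrite -[X in tperm e f g != X](tpermR e f) (inj_eq (@perm_inj _ (tperm e f))).
Qed.

Lemma count_first (T : {set E}) e : e \in T ->
  (#|{perm E}| <= #|T| * \sum_(s : {perm E}) (first s T e : nat))%N.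
Proof.
move=> eT.
have -> : #|{perm E}| = (\sum_(s : {perm E}) 1)%N by rewrite sum1_card.
have H f : f \in T -> (\sum_(s : {perm E}) (first s T f : nat) = \sum_(s : {perm E}) (first s T e : nat))%N.
  move=> fT; rewrite (reindex_inj (mulIg (tperm e f))) /=.
  by apply: eq_bigr => s _; rewrite first_tperm.
rewrite -sum_nat_const -(eq_bigr _ H) exchange_big /=.
apply: leq_sum => s _.
case: (first_exists s eT) => f fT ff.
by rewrite (bigD1 f) //= ff.
Qed.
End Cnt.
Unset Implicit Arguments. Set Strict Implicit.
Local Open Scope ring_scope.

Lemma tangent (R : realFieldType) (t k : R) : 0 <= t -> 0 <= k ->
  (1 + 2 * k - t) / (1 + k) ^+ 2 <= (1 + t)^-1.
Proof.
move=> t0 k0.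
have h1 : 0 < 1 + t by lra.
have h2 : 0 < (1 + k) ^+ 2 by rewrite exprn_gt0 //; lra.
rewrite ler_pdivrMr // [X in _ <= X]mulrC ler_pdivlMr //.
have : 0 <= (k - t) ^+ 2 by apply: sqr_ge0.
rewrite !expr2; nra.
Qed.

Section Coin.
Variables (R : realFieldType) (E : finType) (x : E -> R).

Lemma coin_prod (S : {set E}) :
  \sum_(Y : {ffun E -> bool}) coin_prob 1 x Y * \prod_(i in S) ((Y i)%:R : R)
  = \prod_(i in S) x i.
Proof.
pose G i (b : bool) : R := (if b then x i else 1 - x i) * (if i \in S then b%:R else 1).
have HY Y : coin_prob 1 x Y * \prod_(i in S) ((Y i)%:R : R) = \prod_i G i (Y i).
  rewrite /coin_prob big_split /= (big_mkcond (fun i => i \in S)).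
  by congr (_ * _); apply: eq_bigr => i _; rewrite mul1r; case: (Y i).
rewrite (eq_bigr _ (fun Y _ => HY Y)) -(bigA_distr_bigA G) /=.
rewrite [RHS]big_mkcond; apply: eq_bigr => i _; rewrite big_bool /G /=.
by case: (i \in S); rewrite ?mulr1 ?mulr0 ?addr0 // addrC subrK.
Qed.

Lemma coin_ge0 Y : (forall i, 0 <= x i <= 1) -> 0 <= coin_prob 1 x Y.
Proof.
move=> hx; apply: prodr_ge0 => i _; rewrite mul1r; have /andP[h1 h2] := hx i.
by case: (Y i) => //; rewrite subr_ge0.
Qed.
End Coin.

Section Main.
Variables (R : realFieldType) (V E : finType) (inc : E -> {set V}) (x : E -> R) (e : E).
Let A := [set f | (f != e) && ~~ [disjoint inc f & inc e]].
Let TY (Y : {ffun E -> bool}) := e |: [set f in A | Y f].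

Lemma first_run (Y : {ffun E -> bool}) (s : {perm E}) : Y e -> first s (TY Y) e -> e \in HM_run inc (perm_order s) Y.
Proof.
move=> Ye fs; apply: (run_in V E inc Y) => //; first exact: mem_po.
move=> f fin Yf; have lt := index_ltn fin.
case: (boolP [disjoint inc f & inc e]) => // nd.
have fe : f != e by apply/eqP => fe; rewrite fe ltnn in lt.
have fT : f \in TY Y by rewrite /TY !inE fe nd Yf orbT.
have := forall_inP fs f fT; rewrite fe /= /pos => lt2.
by have := ltn_trans lt lt2; rewrite ltnn.
Qed.

Lemma card_TY (Y : {ffun E -> bool}) : (#|TY Y|%:R : R) = 1 + \sum_(f in A) ((Y f)%:R : R).
Proof.
rewrite /TY cardsU1 !inE eqxx /= natrD; congr (_ + _).
rewrite -sum1_card natr_sum.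
rewrite [RHS]big_mkcond [LHS]big_mkcond; apply: eq_bigr => f _.
by rewrite !inE; case: (Y f); rewrite ?andbT ?andbF; case: ifP.
Qed.

Lemma key (Y : {ffun E -> bool}) : Y e ->
  (1 + \sum_(f in A) ((Y f)%:R : R))^-1 <=
  (#|{perm E}|%:R)^-1 * \sum_(s : {perm E}) ((e \in HM_run inc (perm_order s) Y)%:R : R).
Proof.
move=> Ye; rewrite -card_TY.
have eT : e \in TY Y by rewrite /TY setU11.
have hc := count_first eT.
have hle : (\sum_(s : {perm E}) (first s (TY Y) e : nat) <=
            \sum_(s : {perm E}) (e \in HM_run inc (perm_order s) Y : nat))%N.
  apply: leq_sum => s _; case fs: (first s (TY Y) e) => //.
  by rewrite first_run.
have m0 : (0 < #|{perm E}|)%N by apply/card_gt0P; exists 1%g.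
have t0 : (0 < #|TY Y|)%N by apply/card_gt0P; exists e.
rewrite -natr_sum mulrC ler_pdivlMr ?ltr0n //.
rewrite mulrC ler_pdivrMr ?ltr0n // -natrM ler_nat; apply: leq_trans hc _.

by rewrite mulnC leq_mul2r hle orbT.
Qed.

Lemma sumA_le : lp_feasible inc x -> \sum_(f in A) x f <= #|inc e|%:R.
Proof.
case=> h01 hv.
have x0 f : 0 <= x f by case/andP: (h01 f).
apply: le_trans (_ : \sum_(f in A) \sum_(v in inc e) ((v \in inc f)%:R * x f) <= _).
  apply: ler_sum => f; rewrite inE => /andP[_ nd].
  case/pred0Pn: nd => v /andP[vf ve].
  have vf2 : v \in inc f := vf. have ve2 : v \in inc e := ve.
  rewrite (bigD1 v) //= vf2 mul1r lerDl; apply: sumr_ge0 => u _.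
  by apply: mulr_ge0.
rewrite exchange_big /= -sum1_card natr_sum; apply: ler_sum => v ve.
apply: le_trans (hv v).
apply: le_trans (_ : \sum_f ((v \in inc f)%:R * x f) <= _).
  rewrite [X in _ <= X](bigID (fun f => f \in A)) /= lerDl.
  by apply: sumr_ge0 => f _; apply: mulr_ge0.
by rewrite [X in _ <= X]big_mkcond /=; apply: ler_sum => f _; case: ifP; rewrite ?mul1r ?mul0r.
Qed.

Lemma HM_bound : lp_feasible inc x ->
  x e / (#|inc e|.+1%:R) <= HM_prob inc 1 x e.
Proof.
move=> hf; have h01 := hf.1.
have x0 f : 0 <= x f by case/andP: (h01 f).
set k : R := #|inc e|%:R.
have k0 : 0 <= k by rewrite /k ler0n.
pose N (Y : {ffun E -> bool}) := \sum_(f in A) ((Y f)%:R : R).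
have N0 Y : 0 <= N Y by apply: sumr_ge0 => f _; rewrite ler0n.
pose c : R := (1 + k) ^+ 2.
have c0 : 0 < c by rewrite exprn_gt0 // ltr_wpDr.
have -> : HM_prob inc 1 x e = \sum_(Y : {ffun E -> bool}) coin_prob 1 x Y *
    ((#|{perm E}|%:R)^-1 * \sum_(s : {perm E}) ((e \in HM_run inc (perm_order s) Y)%:R : R)).
  rewrite /HM_prob exchange_big /=; apply: eq_bigr => Y _; rewrite !mulr_sumr.
  by apply: eq_bigr => s _; rewrite mulrA [_^-1 * _]mulrC.
apply: le_trans (_ : \sum_(Y : {ffun E -> bool}) coin_prob 1 x Y *
    ((Y e)%:R * (1 + 2 * k - N Y) / c) <= _); last first.
  apply: ler_sum => Y _; apply: ler_wpM2l; first exact: coin_ge0.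
  case Ye: (Y e); last first.
    rewrite mul0r mul0r; apply: mulr_ge0; first by rewrite invr_ge0 ler0n.
    by apply: sumr_ge0 => s _; rewrite ler0n.
  rewrite mul1r; apply: le_trans _ (key Y Ye); exact: tangent.
have E1 : \sum_(Y : {ffun E -> bool}) coin_prob 1 x Y * ((Y e)%:R : R) = x e.
  have := coin_prod R E x [set e]; rewrite big_set1 => <-.
  by apply: eq_bigr => Y _; rewrite big_set1.
have E2 f : f != e -> \sum_(Y : {ffun E -> bool}) coin_prob 1 x Y * ((Y e)%:R * (Y f)%:R : R) = x e * x f.
  move=> fe; have fe' : e \notin [set f] by rewrite inE eq_sym.
  have := coin_prod R E x (e |: [set f]); rewrite big_setU1 //= big_set1 => <-.
  by apply: eq_bigr => Y _; rewrite big_setU1 //= big_set1.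
have -> : \sum_(Y : {ffun E -> bool}) coin_prob 1 x Y * ((Y e)%:R * (1 + 2 * k - N Y) / c) =
   ((1 + 2 * k) * \sum_(Y : {ffun E -> bool}) coin_prob 1 x Y * (Y e)%:R
    - \sum_(f in A) \sum_(Y : {ffun E -> bool}) coin_prob 1 x Y * ((Y e)%:R * (Y f)%:R)) / c.
  rewrite exchange_big /= mulr_sumr -sumrB mulr_suml; apply: eq_bigr => Y _.
  have -> : \sum_(f in A) coin_prob 1 x Y * ((Y e)%:R * (Y f)%:R) = coin_prob 1 x Y * (Y e)%:R * N Y.
    by rewrite /N mulr_sumr; apply: eq_bigr => f _; rewrite mulrA.
  ring.
rewrite E1 (eq_bigr (fun f => x e * x f)); last first.
  by move=> f; rewrite inE => /andP[fe _]; apply: E2.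
rewrite -mulr_sumr.
have hs := sumA_le hf.
rewrite -nat1r -/k ler_pdivrMr ?ltr_wpDr // mulrAC ler_pdivlMr //.
have : x e * \sum_(f in A) x f <= x e * k by apply: ler_wpM2l.
rewrite /c expr2; nra.
Qed.
End Main.

Theorem lemma7 (R : realFieldType) :
  exists g : nat -> R,
    little_o_id g /\ (forall k : nat, 0 < k.+1%:R + g k) /\
    forall (V E : finType) (inc : E -> {set V}) (w x : E -> R),
      lp_optimal inc w x ->
      forall e : E,
        x e / ((#|inc e|).+1%:R + g #|inc e|) <= HM_prob inc 1 x e.
Proof.
exists (fun _ => 0); split.
  move=> eps he; exists 0%N => k _; rewrite normr0; apply: mulr_ge0; [exact: ltW|exact: ler0n].
split; first by move=> k; rewrite addr0 ltr0n.
move=> V E inc w x [hf _] e; rewrite addr0; exact: (HM_bound R V E inc x e hf).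
Qed.
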